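(* Assume (A1)–(A3) and let $\bar u_{\bar e}\in S(\bar e)$. Then $\widehat N((\bar e,\bar u_{\bar e});\operatorname{gph}\mathcal U_{ad})=\{(e^*,u^* )\in E^*\times L^2(\Omega): e^*=(0,0,e^*_\alpha,e^*_\beta),\ u^*=-e^*_\alpha-e^*_\beta,\ e^*_\alpha\ge0\text{ on }\Omega_1(\bar e,\bar u_{\bar e}),\ e^*_\alpha=0\text{ on }\Omega\setminus\Omega_1(\bar e,\bar u_{\bar e}),\ e^*_\beta\le0\text{ on }\Omega_3(\bar e,\bar u_{\bar e}),\ e^*_\beta=0\text{ on }\Omega\setminus\Omega_3(\bar e,\bar u_{\bar e})\}$.
   Context: Let $\Omega\subset\mathbb R^N$, $N\in\{1,2,3\}$; $\alpha,\beta\in L^\infty(\Omega)$, $\alpha\le\beta$, $\alpha\not\equiv\beta$; $\zeta\in L^2(\Omega)$, $\zeta\ge0$. $Ay=-\sum_{i,j}\partial_{x_j}(a_{ij}\partial_{x_i}y)$. $L,f$ Carathéodory, $C^2$ in $y$, with (A1) $f(\cdot,0)\in L^{\bar p}$, $\bar p>N/2$, $\partial f/\partial y\ge0$, $|\partial f/\partial y|+|\partial^2f/\partial y^2|\le C_{f,M}$ for $|y|\le M$, $\partial^2f/\partial y^2(x,\cdot)$ uniformly continuous on $[-M,M]$ uniformly in $x$; (A2) $L(\cdot,0)\in L^1$, $|\partial L/\partial y|\le\psi_M\in L^{\bar p}$, $|\partial^2L/\partial y^2|\le C_{L,M}$ for $|y|\le M$, $\partial^2L/\partial y^2(x,\cdot)$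 uniformly continuous likewise; (A3) $\Omega$ open bounded with Lipschitz boundary $\Gamma$, $\mathcal Q\subset L^2(\Omega)$ closed convex bounded with $\mathcal U_{ad}(e)\cap\operatorname{int}\mathcal Q\ne\emptyset$ for some $e$, $a_{ij}\in C(\bar\Omega)$ uniformly elliptic. $y_u$ solves $Ay+f(x,y)=u$, $y=0$ on $\Gamma$; $J(u)=\int_\Omega L(x,y_u)+\frac12\int_\Omega\zeta u^2$. $E=L^2(\Omega)^4$, $e=(e_y,e_J,e_\alpha,e_\beta)$ with sum norm; $\mathcal U_{ad}(e)=\{u\in L^2:\alpha+e_\alpha\le u\le\beta+e_\beta\text{ a.e.}\}$ viewed as a multifunction $E\rightrightarrows L^2(\Omega)$; $\mathcal G(e)=\mathcal U_{ad}(e)\cap\mathcal Q$; $\mathcal J(u,e)=J(u+e_y)+(e_J,y_{u+e_y})_{L^2}$; $S(e)=\{u\in\mathcal G(e):\mathcal J(u,e)=\inf_{\mathcal G(e)}\mathcal J(\cdot,e)\}$. $\Omega_1(e,u)=\{x:u(x)=\alpha(x)+e_\alpha(x)\}$, $\Omega_3(e,u)=\{x:u(x)=\beta(x)+e_\beta(x)\}$. $\widehat N$ denotes the regular (Fréchet) normal cone. *)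

(* Defs.v *)
From HB Require Import structures.
From mathcomp Require Import all_boot all_order all_algebra.
From mathcomp Require Import all_classical all_reals all_analysis.
Set Implicit Arguments. Unset Strict Implicit. Unset Printing Implicit Defensive.
Import Order.TTheory GRing.Theory Num.Theory.
Local Open Scope classical_set_scope.
Local Open Scope ring_scope.

Section Defs.
Context {R : realType} {d : measure_display} {T : measurableType d}.
Variable mu : {measure set T -> \bar R}.
Variable Om : set T.

Definition L2 (f : T -> R) : Prop :=
  measurable_fun Om f /\ mu.-integrable Om (fun x => (f x ^+ 2)%:E).

Definition Linf (f : T -> R) : Prop :=
  measurable_fun Om f /\ exists M : R, {ae mu, forall x, Om x -> `|f x| <= M}.

Definition ip (f g : T -> R) : R := Rintegral mu Om (fun x => f x * g x).
Definition nrm (f : T -> R) : R := Num.sqrt (ip f f).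

(* E = L^2(Omega)^4, e = (e_y, e_J, e_alpha, e_beta), with the sum norm *)
Record E4 := mkE { ey : T -> R; eJ : T -> R; ea : T -> R; eb : T -> R }.
Definition E4L2 (e : E4) : Prop := [/\ L2 (ey e), L2 (eJ e), L2 (ea e) & L2 (eb e)].
Definition E4sub (e e' : E4) : E4 :=
  mkE (ey e \- ey e') (eJ e \- eJ e') (ea e \- ea e') (eb e \- eb e').
Definition nrmE (e : E4) : R := nrm (ey e) + nrm (eJ e) + nrm (ea e) + nrm (eb e).
(* duality pairing of E^* = L^2(Omega)^4 (Riesz) with E *)
Definition ipE (es e : E4) : R :=
  ip (ey es) (ey e) + ip (eJ es) (eJ e) + ip (ea es) (ea e) + ip (eb es) (eb e).

Definition Uad (alpha beta : T -> R) (e : E4) (u : T -> R) : Prop :=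
  L2 u /\ {ae mu, forall x, Om x ->
           alpha x + ea e x <= u x /\ u x <= beta x + eb e x}.

Definition gphUad (alpha beta : T -> R) : set (E4 * (T -> R)) :=
  [set p | E4L2 p.1 /\ Uad alpha beta p.1 p.2].

(* regular (Frechet) normal cone to C at (eb0,ub0) in E x L^2(Omega),
   elements of the dual identified with E4 x L^2 via Riesz:
   limsup_{(e,u) -> (eb0,ub0), (e,u) in C} <(es,us),(e,u)-(eb0,ub0)> / ||(e,u)-(eb0,ub0)|| <= 0 *)
Definition regular_normal (C : set (E4 * (T -> R))) (eb0 : E4) (ub0 : T -> R)
  : set (E4 * (T -> R)) :=
  [set q | E4L2 q.1 /\ L2 q.2 /\
     forall eps : R, 0 < eps -> exists2 del : R, 0 < del &
       forall e u, C (e, u) ->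
         nrmE (E4sub e eb0) + nrm (u \- ub0) < del ->
         ipE q.1 (E4sub e eb0) + ip q.2 (u \- ub0)
           <= eps * (nrmE (E4sub e eb0) + nrm (u \- ub0))].

Definition Jcost (ysol : (T -> R) -> (T -> R)) (L : T -> R -> R) (zeta : T -> R)
  (u : T -> R) : R :=
  Rintegral mu Om (fun x => L x (ysol u x))
  + 2^-1 * Rintegral mu Om (fun x => zeta x * u x ^+ 2).

Definition Jpert ysol L zeta (u : T -> R) (e : E4) : R :=
  Jcost ysol L zeta (u \+ ey e) + ip (eJ e) (ysol (u \+ ey e)).

Definition Gfeas alpha beta (Q : set (T -> R)) (e : E4) : set (T -> R) :=
  [set u | Uad alpha beta e u /\ Q u].

Definition Ssol ysol L zeta alpha beta Q (e : E4) : set (T -> R) :=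
  [set u | Gfeas alpha beta Q e u /\
     forall v, Gfeas alpha beta Q e v -> Jpert ysol L zeta u e <= Jpert ysol L zeta v e].

Definition Om1 (alpha : T -> R) (e : E4) (u : T -> R) : set T :=
  [set x | Om x /\ u x = alpha x + ea e x].
Definition Om3 (beta : T -> R) (e : E4) (u : T -> R) : set T :=
  [set x | Om x /\ u x = beta x + eb e x].

Definition L2closed (Q : set (T -> R)) : Prop :=
  forall (f : nat -> T -> R) (g : T -> R), (forall n, Q (f n)) -> L2 g ->
    (forall eps : R, 0 < eps -> exists N : nat, forall n, (N <= n)%N -> nrm (f n \- g) < eps) ->
    Q g.
Definition L2convex (Q : set (T -> R)) : Prop :=
  forall f g (t : R), Q f -> Q g -> 0 <= t <= 1 ->
    Q (fun x => t * f x + (1 - t) * g x).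
Definition L2bounded (Q : set (T -> R)) : Prop :=
  exists M : R, forall f, Q f -> nrm f <= M.
Definition Slater alpha beta (Q : set (T -> R)) : Prop :=
  exists e u, E4L2 e /\ Uad alpha beta e u /\
    exists2 r : R, 0 < r & forall v, L2 v -> nrm (v \- u) < r -> Q v.

End Defs.

(* Main.v *)
Require Import Defs.
From HB Require Import structures.
From mathcomp Require Import all_boot all_order all_algebra.
From mathcomp Require Import all_classical all_reals all_analysis.
From mathcomp Require Import ring lra measurable_realfun.
Set Implicit Arguments. Unset Strict Implicit. Unset Printing Implicit Defensive.
Import Order.TTheory GRing.Theory Num.Theory.
Local Open Scope classical_set_scope.
Local Open Scope ring_scope.

Section H.
Context {R : realType} {d : measure_display} {T : measurableType d}.
Variable mu : {measure set T -> \bar R}.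
Variable Om : set T.
Hypothesis mOm : measurable Om.

Local Notation L2 := (L2 mu Om).
Local Notation ip := (ip mu Om).
Local Notation nrm := (nrm mu Om).
Local Notation intR f := (mu.-integrable Om (EFin \o f)).

Lemma L2_meas f : L2 f -> measurable_fun Om f.
Proof. by case. Qed.

Lemma intR_dom (f g : T -> R) : measurable_fun Om f -> (forall x, Om x -> `|f x| <= `|g x|) ->
  intR g -> intR f.
Proof.
move=> mf fg ig; apply: (le_integrable mOm _ _ ig).
  exact/measurable_EFinP.
by move=> x Ox /=; rewrite lee_fin fg.
Qed.

Lemma intR_lin (f g : T -> R) a b : intR f -> intR g ->
  intR (fun x => a * f x + b * g x).
Proof.
move=> i1 i2.
apply: (eq_integrable mOm _ _ _ (integrableD mOm (integrableZl mOm a i1) (integrableZl mOm b i2))).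
by move=> x _ /=; rewrite EFinD !EFinM.
Qed.

Lemma sq_bound (a b u v : R) : `|(a * u + b * v) ^+ 2| <=
   `|2 * a ^+ 2 * u ^+ 2 + 2 * b ^+ 2 * v ^+ 2|.
Proof.
have h1 : 0 <= a ^+ 2 := sqr_ge0 a. have h2 : 0 <= b ^+ 2 := sqr_ge0 b.
have h3 : 0 <= u ^+ 2 := sqr_ge0 u. have h4 : 0 <= v ^+ 2 := sqr_ge0 v.
have h5 : 0 <= (a * u - b * v) ^+ 2 := sqr_ge0 _.
rewrite ger0_norm ?sqr_ge0 // ger0_norm; last by nra.
nra.
Qed.

Lemma prod_bound (u v : R) : `|u * v| <= `|1 * u ^+ 2 + 1 * v ^+ 2|.
Proof.
rewrite (ger0_norm (x := 1 * _ + _)); last by rewrite !mul1r addr_ge0 // sqr_ge0.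
rewrite normrM -(real_normK (num_real u)) -(real_normK (num_real v)).
have := normr_ge0 u; have := normr_ge0 v; nra.
Qed.

Lemma L2_lin (f g : T -> R) a b : L2 f -> L2 g -> L2 (fun x => a * f x + b * g x).
Proof.
move=> [mf i1] [mg i2]; split.
  apply: measurable_funD; apply: measurable_funM => //; exact: measurable_cst.
apply: (intR_dom (g := fun x => 2 * a ^+ 2 * f x ^+ 2 + 2 * b ^+ 2 * g x ^+ 2)).
- apply: measurable_funM; apply: measurable_funD; apply: measurable_funM => //; exact: measurable_cst.
- by move=> x _; exact: sq_bound.
- exact: intR_lin.
Qed.

Lemma L2_0 : L2 (fun _ => 0).
Proof.
split; first exact: measurable_cst.
apply: (eq_integrable mOm _ _ _ (integrable0 mu Om)) => x _ /=; by rewrite expr0n.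
Qed.

Lemma intR_prod (f g : T -> R) : L2 f -> L2 g -> intR (fun x => f x * g x).
Proof.
move=> [mf i1] [mg i2].
apply: (intR_dom (g := fun x => 1 * f x ^+ 2 + 1 * g x ^+ 2)).
- exact: measurable_funM.
- by move=> x _; exact: prod_bound.
- exact: intR_lin.
Qed.

Lemma intR0 : intR (fun _ => 0).
Proof. by apply: (eq_integrable mOm _ _ _ (integrable0 mu Om)). Qed.

Lemma Rint0 : Rintegral mu Om (fun _ => 0) = 0.
Proof. by rewrite Rintegral_cst // mul0r. Qed.

Lemma ip0 f : ip f (fun _ => 0) = 0.
Proof. by rewrite /Defs.ip; under eq_Rintegral do rewrite mulr0; rewrite Rint0. Qed.

Lemma ipZ f h t : L2 f -> L2 h -> ip f (fun x => t * h x) = t * ip f h.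
Proof.
move=> Lf Lh; rewrite /Defs.ip; under eq_Rintegral do rewrite mulrCA.
by rewrite RintegralZl //; exact: intR_prod.
Qed.

Lemma nrm_ge0 f : 0 <= nrm f.
Proof. exact: sqrtr_ge0. Qed.

Lemma nrmZ h t : 0 <= t -> L2 h -> nrm (fun x => t * h x) = t * nrm h.
Proof.
move=> t0 Lh; rewrite /Defs.nrm /Defs.ip.
under eq_Rintegral do rewrite mulrACA -expr2.
rewrite RintegralZl //; last exact: intR_prod.
by rewrite sqrtrM ?sqr_ge0 // sqrtr_sqr ger0_norm.
Qed.

Lemma Rint_eq0 (phi : T -> R) : intR phi -> (forall x, Om x -> 0 <= phi x) ->
  Rintegral mu Om phi <= 0 -> {ae mu, forall x, Om x -> phi x = 0}.
Proof.
move=> ip p0 ple.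
have fin := integrable_fin_num mOm ip.
have ge : (0 <= \int[mu]_(x in Om) (EFin \o phi) x)%E.
  by apply: integral_ge0 => x Ox /=; rewrite lee_fin p0.
have e0 : (\int[mu]_(x in Om) (EFin \o phi) x = 0)%E.
  apply/eqP; rewrite eq_le ge andbT.
  by rewrite -(fineK fin) lee_fin.
have : (\int[mu]_(x in Om) `|(EFin \o phi) x| = 0)%E.
  rewrite -e0; apply: eq_integral => x /set_mem Ox /=.
  by rewrite ger0_norm // p0.
move/(ae_eq_integral_abs mu mOm (measurable_int mu ip)).
apply: filterS => x h Ox; have := h Ox.
by move=> /= [].
Qed.

Lemma Rint_le0 (phi : T -> R) : intR phi -> {ae mu, forall x, Om x -> phi x <= 0} ->
  Rintegral mu Om phi <= 0.
Proof.
move=> ip hae.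
have mphi : measurable_fun Om phi.
  by apply/measurable_EFinP; exact: (measurable_int mu ip).
pose psi := fun x => Num.min (phi x) 0.
have mpsi : measurable_fun Om psi.
  by apply: measurable_minr => //; exact: measurable_cst.
have ipsi : intR psi.
  apply: (intR_dom mpsi _ ip) => x _; rewrite /psi.
  by have [h|h] := leP (phi x) 0 => //; rewrite normr0 normr_ge0.
have -> : Rintegral mu Om phi = Rintegral mu Om psi.
  rewrite /Rintegral; congr fine.
  apply: (ae_eq_integral (EFin \o psi)) => //.
  - exact/measurable_EFinP.
  - exact/measurable_EFinP.
  apply: filterS hae => x h Ox /=; rewrite /psi.
  by have [h2|h2] := leP (phi x) 0 => //; have := h Ox; rewrite leNgt h2.
rewrite -Rint0; apply: le_Rintegral => //; first exact: intR0.
by move=> x _; rewrite /psi; have [h|h] := leP (phi x) 0.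
Qed.

Variables alpha beta : T -> R.
Local Notation C := (gphUad mu Om alpha beta).

Definition pert (e0 : @E4 R d T) (dy dJ da db : T -> R) t :=
  mkE (fun x => ey e0 x + t * dy x) (fun x => eJ e0 x + t * dJ x)
      (fun x => ea e0 x + t * da x) (fun x => eb e0 x + t * db x).

Lemma normal_dir (q : @E4 R d T * (T -> R)) e0 u0 (dy dJ da db du : T -> R) :
  regular_normal mu Om C e0 u0 q ->
  L2 dy -> L2 dJ -> L2 da -> L2 db -> L2 du ->
  (forall t, 0 < t -> t <= 1 -> C (pert e0 dy dJ da db t, fun x => u0 x + t * du x)) ->
  ip (ey q.1) dy + ip (eJ q.1) dJ + ip (ea q.1) da + ip (eb q.1) db + ip q.2 du <= 0.
Proof.
case: q => qe qu /= [[Ly LJ La Lb] [Lu H]] Ldy LdJ Lda Ldb Ldu HC.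
set P := _ + ip qu du.
set N := nrm dy + nrm dJ + nrm da + nrm db + nrm du.
have N0 : 0 <= N by rewrite /N !addr_ge0 // nrm_ge0.
have key : forall eps, 0 < eps -> exists2 del, 0 < del &
    forall t, 0 < t -> t <= 1 -> t * N < del -> t * P <= eps * (t * N).
  move=> eps eps0; have [del del0 Hd] := H eps eps0; exists del => // t t0 t1 tN.
  have Es : E4sub (pert e0 dy dJ da db t) e0 =
      mkE (fun x => t * dy x) (fun x => t * dJ x) (fun x => t * da x) (fun x => t * db x).
    by rewrite /E4sub /pert /=; congr mkE; apply: funext => x /=; rewrite addrC addKr.
  have Eu : (fun x => u0 x + t * du x) \- u0 = (fun x => t * du x).
    by apply: funext => x /=; rewrite addrC addKr.
  have t0' := ltW t0.
  have := Hd _ _ (HC t t0 t1); rewrite Es Eu /nrmE /ipE /= !nrmZ // !ipZ //.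
  have -> : t * P = t * ip (ey qe) dy + t * ip (eJ qe) dJ + t * ip (ea qe) da +
     t * ip (eb qe) db + t * ip qu du by rewrite /P; ring.
  have -> : t * N = t * nrm dy + t * nrm dJ + t * nrm da + t * nrm db + t * nrm du
    by rewrite /N; ring.
  move=> h; apply: h; suff -> : t * nrm dy + t * nrm dJ + t * nrm da + t * nrm db + t * nrm du = t * N by [].
  by rewrite /N; ring.
apply/negPn/negP; rewrite -ltNge => P0.
set K := N + 1.
have K0 : 0 < K by rewrite /K; lra.
pose eps := P / (2 * K).
have eps2K : eps * (2 * K) = P by rewrite /eps mulfVK // mulf_neq0 // gt_eqF.
have eps0 : 0 < eps by rewrite /eps divr_gt0 // mulr_gt0.
have [del del0 Hd] := key eps eps0.
pose t := Num.min 1 (del / (2 * K)).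
have t0 : 0 < t by rewrite /t lt_min ltr01 divr_gt0 // mulr_gt0.
have t1 : t <= 1 by rewrite /t ge_min lexx.
have t2 : t * (2 * K) <= del.
  have : t <= del / (2 * K) by rewrite /t ge_min lexx orbT.
  by rewrite ler_pdivlMr ?mulr_gt0.
have tN : t * N < del by rewrite /K in t2 K0 *; nra.
have := Hd t t0 t1 tN.
rewrite /K in eps2K K0; nra.
Qed.
End H.

Section Pw.
Context {R : realType}.
Implicit Types a b s : R.
Ltac cif := repeat (case: ifPn; [move=> ?| rewrite -ltNge => ?]).
Ltac mm := rewrite ?maxEle; cif; rewrite ?minEle; cif.
Lemma nnA a : 0 <= a * Num.min a 0.
Proof. mm; nra. Qed.
Lemma nnB a s : 0 <= a * Num.min (Num.max a 0) (Num.max s 0).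
Proof. mm; nra. Qed.
Lemma nnC b : 0 <= b * Num.max b 0.
Proof. mm; nra. Qed.
Lemma nnD b s : 0 <= b * - Num.min (Num.max (- b) 0) (Num.max s 0).
Proof. mm; nra. Qed.
Lemma pwA a : a * Num.min a 0 = 0 -> 0 <= a.
Proof. mm; nra. Qed.
Lemma pwB a s : 0 <= a -> 0 < s -> a * Num.min (Num.max a 0) (Num.max s 0) = 0 -> a = 0.
Proof. mm; nra. Qed.
Lemma pwC b : b * Num.max b 0 = 0 -> b <= 0.
Proof. mm; nra. Qed.
Lemma pwD b s : b <= 0 -> 0 < s -> b * - Num.min (Num.max (- b) 0) (Num.max s 0) = 0 -> b = 0.
Proof. mm; nra. Qed.
Lemma bdA a : `|Num.min a 0| <= `|a|.
Proof. mm; rewrite ?normr0 ?normr_ge0 //. Qed.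
Lemma bdB a s : `|Num.min (Num.max a 0) (Num.max s 0)| <= `|a|.
Proof. mm; rewrite ?normr0 ?normr_ge0 //; rewrite !ger0_norm //; lra. Qed.
Lemma bdC b : `|Num.max b 0| <= `|b|.
Proof. mm; rewrite ?normr0 ?normr_ge0 //. Qed.
Lemma bdD b s : `|- Num.min (Num.max (- b) 0) (Num.max s 0)| <= `|b|.
Proof. rewrite normrN -(normrN b); exact: bdB. Qed.
Lemma sgA a : Num.min a 0 <= 0.
Proof. mm; lra. Qed.
Lemma sgB a s : 0 <= s -> 0 <= Num.min (Num.max a 0) (Num.max s 0) <= s.
Proof. move=> s0; mm; lra. Qed.
Lemma sgC b : 0 <= Num.max b 0.
Proof. mm; lra. Qed.
End Pw.

Section H2.
Context {R : realType} {d : measure_display} {T : measurableType d}.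
Variable mu : {measure set T -> \bar R}.
Variable Om : set T.
Hypothesis mOm : measurable Om.
Local Notation L2 := (L2 mu Om).
Local Notation ip := (ip mu Om).
Local Notation intR f := (mu.-integrable Om (EFin \o f)).

Lemma L2_pert (f g : T -> R) t : L2 f -> L2 g -> L2 (fun x => f x + t * g x).
Proof.
move=> Lf Lg; have := L2_lin mOm 1 t Lf Lg.
by have -> : (fun x => 1 * f x + t * g x) = (fun x => f x + t * g x)
  by apply: funext => x; rewrite mul1r.
Qed.

Lemma L2_sub (f g : T -> R) : L2 f -> L2 g -> L2 (f \- g).
Proof.
move=> Lf Lg; have := L2_lin mOm 1 (-1) Lf Lg.
by have -> : (fun x => 1 * f x + (-1) * g x) = (f \- g)
  by apply: funext => x /=; rewrite mul1r mulN1r.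
Qed.

Lemma L2_add (f g : T -> R) : L2 f -> L2 g -> L2 (fun x => f x + g x).
Proof.
move=> Lf Lg; have := L2_lin mOm 1 1 Lf Lg.
by have -> : (fun x => 1 * f x + 1 * g x) = (fun x => f x + g x)
  by apply: funext => x /=; rewrite !mul1r.
Qed.

Lemma L2_dom (f g : T -> R) : measurable_fun Om f ->
  (forall x, Om x -> `|f x| <= `|g x|) -> L2 g -> L2 f.
Proof.
move=> mf fg [mg ig]; split => //.
apply: (intR_dom mOm (g := fun x => g x ^+ 2)).
- exact: measurable_funM.
- move=> x Ox; have := fg x Ox.
  rewrite (ger0_norm (sqr_ge0 (f x))) (ger0_norm (sqr_ge0 (g x))) -(real_normK (num_real (f x))) -(real_normK (num_real (g x))).
  have := normr_ge0 (f x); nra.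
- exact: ig.
Qed.

Lemma intR_add (f g : T -> R) : intR f -> intR g -> intR (fun x => f x + g x).
Proof.
move=> i1 i2; have := intR_lin mOm 1 1 i1 i2.
by have -> : (fun x => 1 * f x + 1 * g x) = (fun x => f x + g x)
  by apply: funext => x /=; rewrite !mul1r.
Qed.

Lemma ipD (f1 f2 h : T -> R) : L2 f1 -> L2 f2 -> L2 h ->
  ip f1 h + ip f2 h = ip (fun x => f1 x + f2 x) h.
Proof.
move=> L1 L2' Lh; rewrite /Defs.ip -RintegralD //; try exact: intR_prod.
by apply: eq_Rintegral => x _; rewrite mulrDl.
Qed.

Lemma feas alpha beta (e0 : @E4 R d T) u0 dy dJ da db du : E4L2 mu Om e0 -> L2 u0 ->
  L2 dy -> L2 dJ -> L2 da -> L2 db -> L2 du ->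
  (forall t, 0 < t -> t <= 1 -> {ae mu, forall x, Om x ->
     alpha x + (ea e0 x + t * da x) <= u0 x + t * du x /\
     u0 x + t * du x <= beta x + (eb e0 x + t * db x)}) ->
  forall t, 0 < t -> t <= 1 ->
  gphUad mu Om alpha beta (pert e0 dy dJ da db t, fun x => u0 x + t * du x).
Proof.
move=> [Ly LJ La Lb] Lu Ldy LdJ Lda Ldb Ldu H t t0 t1.
split; first by split; apply: L2_pert.
split; first exact: L2_pert.
exact: H.
Qed.
End H2.

Unset Implicit Arguments.
Set Strict Implicit.
Theorem lemma3p2 (R : realType) (d : measure_display) (T : measurableType d)
  (mu : {measure set T -> \bar R}) (Om : set T)
  (alpha beta zeta : T -> R) (L : T -> R -> R)
  (ysol : (T -> R) -> (T -> R)) (Q : set (T -> R))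
  (ebar : @E4 R d T) (ubar : T -> R) :
  measurable Om -> (mu Om < +oo)%E ->
  Linf mu Om alpha -> Linf mu Om beta ->
  {ae mu, forall x, Om x -> alpha x <= beta x} ->
  ~ {ae mu, forall x, Om x -> alpha x = beta x} ->
  L2 mu Om zeta -> {ae mu, forall x, Om x -> 0 <= zeta x} ->
  (forall u, Q u -> L2 mu Om u) ->
  L2closed mu Om Q -> L2convex Q -> L2bounded mu Om Q ->
  Slater mu Om alpha beta Q ->
  E4L2 mu Om ebar ->
  Ssol mu Om ysol L zeta alpha beta Q ebar ubar ->
  regular_normal mu Om (gphUad mu Om alpha beta) ebar ubar =
  [set q | E4L2 mu Om q.1 /\ L2 mu Om q.2 /\
     {ae mu, forall x, Om x ->
        [/\ ey q.1 x = 0, eJ q.1 x = 0 &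
            q.2 x = - ea q.1 x - eb q.1 x] /\
        [/\ (Om1 Om alpha ebar ubar x -> 0 <= ea q.1 x),
            (~ Om1 Om alpha ebar ubar x -> ea q.1 x = 0),
            (Om3 Om beta ebar ubar x -> eb q.1 x <= 0) &
            (~ Om3 Om beta ebar ubar x -> eb q.1 x = 0)]}].
Proof.
move=> mOm _ [ma _] [mb _] _ _ _ _ _ _ _ _ _ HE [[[Lub Hub] _] _].
have HE' := HE; case: HE' => Ley LeJ Lea Leb.
have L2z := L2_0 mu mOm.
have ip0' := ip0 mu mOm.
have mub : measurable_fun Om ubar := L2_meas Lub.
have mea : measurable_fun Om (ea ebar) := L2_meas Lea.
have meb : measurable_fun Om (eb ebar) := L2_meas Leb.
have andI : forall P P2 : set T, almost_everywhere mu P -> almost_everywhere mu P2 ->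
   almost_everywhere mu (fun x => P x /\ P2 x).
  by move=> P P2 hp hq; apply: filterS2 hp hq => x a b; split.
apply/seteqP; split => -[qe qu].
- move=> Hn; have Hn' := Hn; case: Hn' => [[Lqy LqJ Lqa Lqb] [Lqu _]] /=.
  split; first by split. split => //.
  have S1 : {ae mu, forall x, Om x -> ey qe x * ey qe x = 0}.
    have := normal_dir mOm Hn Lqy L2z L2z L2z L2z
      (feas mOm HE Lub Lqy L2z L2z L2z L2z _).
    rewrite /= !ip0' !addr0 => H; apply: (Rint_eq0 mOm (intR_prod mOm Lqy Lqy) _ (H _)).
      all: try by move=> x _; nra.
    move=> t t0 t1; apply: filterS Hub => x h Ox; have [h1 h2] := h Ox.
    by rewrite !mulr0 !addr0.
  have S2 : {ae mu, forall x, Om x -> eJ qe x * eJ qe x = 0}.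
    have := normal_dir mOm Hn L2z LqJ L2z L2z L2z
      (feas mOm HE Lub L2z LqJ L2z L2z L2z _).
    rewrite /= !ip0' add0r !addr0 => H; apply: (Rint_eq0 mOm (intR_prod mOm LqJ LqJ) _ (H _)).
      all: try by move=> x _; nra.
    move=> t t0 t1; apply: filterS Hub => x h Ox; have [h1 h2] := h Ox.
    by rewrite !mulr0 !addr0.
  pose h3 := fun x => ea qe x + eb qe x + qu x.
  have L3 : L2 mu Om h3 := L2_add mOm (L2_add mOm Lqa Lqb) Lqu.
  have S3 : {ae mu, forall x, Om x -> h3 x * h3 x = 0}.
    have := normal_dir mOm Hn L2z L2z L3 L3 L3
      (feas mOm HE Lub L2z L2z L3 L3 L3 _).
    rewrite /= !ip0' !add0r (ipD mOm Lqa Lqb L3) (ipD mOm (L2_add mOm Lqa Lqb) Lqu L3) => H.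
    apply: (Rint_eq0 mOm (intR_prod mOm L3 L3) _ (H _)).
      all: try by move=> x _; nra.
    move=> t t0 t1; apply: filterS Hub => x h Ox; have [h1 h2] := h Ox.
    by split; lra.
  pose m4 := fun x => Num.min (ea qe x) 0.
  have mqa : measurable_fun Om (ea qe) := L2_meas Lqa.
  have mqb : measurable_fun Om (eb qe) := L2_meas Lqb.
  have L4 : L2 mu Om m4.
    apply: (L2_dom mOm _ (fun x _ => bdA (ea qe x)) Lqa).
    by apply: measurable_minr => //; exact: measurable_cst.
  have S4 : {ae mu, forall x, Om x -> ea qe x * m4 x = 0}.
    have := normal_dir mOm Hn L2z L2z L4 L2z L2z
      (feas mOm HE Lub L2z L2z L4 L2z L2z _).
    rewrite /= !ip0' !add0r !addr0 => H.
    apply: (Rint_eq0 mOm (intR_prod mOm Lqa L4) _ (H _)).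
      all: try by move=> x _; exact: nnA.
    move=> t t0 t1; apply: filterS Hub => x h Ox; have [h1 h2] := h Ox.
    have := sgA (ea qe x); rewrite -/(m4 x) => h3'.
    rewrite !mulr0 !addr0; split; nra.
  pose s5 := fun x => ubar x - alpha x - ea ebar x.
  pose h5 := fun x => Num.min (Num.max (ea qe x) 0) (Num.max (s5 x) 0).
  have L5 : L2 mu Om h5.
    apply: (L2_dom mOm _ (fun x _ => bdB (ea qe x) (s5 x)) Lqa).
    apply: measurable_minr; apply: measurable_maxr => //; try exact: measurable_cst.
    by apply: measurable_funB => //; apply: measurable_funB.
  have S5 : {ae mu, forall x, Om x -> ea qe x * h5 x = 0}.
    have := normal_dir mOm Hn L2z L2z L5 L2z L2z
      (feas mOm HE Lub L2z L2z L5 L2z L2z _).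
    rewrite /= !ip0' !add0r !addr0 => H.
    apply: (Rint_eq0 mOm (intR_prod mOm Lqa L5) _ (H _)).
      all: try by move=> x _; exact: nnB.
    move=> t t0 t1; apply: filterS Hub => x h Ox; have [h1 h2] := h Ox.
    have s0 : 0 <= s5 x by rewrite /s5; lra.
    have /andP[h3' h4'] := sgB (ea qe x) s0; rewrite -/(h5 x) in h3' h4'.
    rewrite !mulr0 !addr0; split; rewrite /s5 in h4'; nra.
  pose p6 := fun x => Num.max (eb qe x) 0.
  have L6 : L2 mu Om p6.
    apply: (L2_dom mOm _ (fun x _ => bdC (eb qe x)) Lqb).
    by apply: measurable_maxr => //; exact: measurable_cst.
  have S6 : {ae mu, forall x, Om x -> eb qe x * p6 x = 0}.
    have := normal_dir mOm Hn L2z L2z L2z L6 L2z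
      (feas mOm HE Lub L2z L2z L2z L6 L2z _).
    rewrite /= !ip0' !add0r !addr0 => H.
    apply: (Rint_eq0 mOm (intR_prod mOm Lqb L6) _ (H _)).
      all: try by move=> x _; exact: nnC.
    move=> t t0 t1; apply: filterS Hub => x h Ox; have [h1 h2] := h Ox.
    have := sgC (eb qe x); rewrite -/(p6 x) => h3'.
    rewrite !mulr0 !addr0; split; nra.
  pose s7 := fun x => beta x + eb ebar x - ubar x.
  pose h7 := fun x => - Num.min (Num.max (- eb qe x) 0) (Num.max (s7 x) 0).
  have L7 : L2 mu Om h7.
    apply: (L2_dom mOm _ (fun x _ => bdD (eb qe x) (s7 x)) Lqb).
    apply: measurable_funN; apply: measurable_minr; apply: measurable_maxr => //;
      try exact: measurable_cst.
    - exact: measurable_funN.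
    - by apply: measurable_funB => //; apply: measurable_funD.
  have S7 : {ae mu, forall x, Om x -> eb qe x * h7 x = 0}.
    have := normal_dir mOm Hn L2z L2z L2z L7 L2z
      (feas mOm HE Lub L2z L2z L2z L7 L2z _).
    rewrite /= !ip0' !add0r !addr0 => H.
    apply: (Rint_eq0 mOm (intR_prod mOm Lqb L7) _ (H _)).
      all: try by move=> x _; exact: nnD.
    move=> t t0 t1; apply: filterS Hub => x h Ox; have [h1 h2] := h Ox.
    have s0 : 0 <= s7 x by rewrite /s7; lra.
    have /andP[h3' h4'] := sgB (- eb qe x) s0.
    rewrite /h7; rewrite /s7 in h4'; rewrite !mulr0 !addr0; split; nra.
  have big := andI _ _ S1 (andI _ _ S2 (andI _ _ S3 (andI _ _ S4
     (andI _ _ S5 (andI _ _ S6 (andI _ _ S7 Hub)))))).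
  apply: filterS big => x [a1 [a2 [a3 [a4 [a5 [a6 [a7 hu]]]]]]] Ox.
  have {a1}a1 := a1 Ox; have {a2}a2 := a2 Ox; have {a3}a3 := a3 Ox.
  have {a4}a4 := a4 Ox; have {a5}a5 := a5 Ox; have {a6}a6 := a6 Ox.
  have {a7}a7 := a7 Ox; have [u1 u2] := hu Ox.
  have qa0 := pwA a4. have qb0 := pwC a6.
  split; first split.
  - by move/eqP: a1; rewrite mulf_eq0 orbb => /eqP.
  - by move/eqP: a2; rewrite mulf_eq0 orbb => /eqP.
  - by move/eqP: a3; rewrite mulf_eq0 orbb => /eqP; rewrite /h3; lra.
  split => // nO.
  - apply: (pwB qa0 _ a5); rewrite /s5 lt_neqAle; apply/andP; split; last lra.
    apply/negP => /eqP e; apply: nO; split => //; lra.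
  - apply: (pwD qb0 _ a7); rewrite /s7 lt_neqAle; apply/andP; split; last lra.
    apply/negP => /eqP e; apply: nO; split => //; lra.
- move=> [[Lqy LqJ Lqa Lqb] [Lqu Hq]] /=.
  split; first by split. split => //.
  move=> eps eps0; exists 1 => // e u [[Ly LJ La Lb] [Lu Hu]] _.
  have N0 : 0 <= nrmE mu Om (E4sub e ebar) + nrm mu Om (u \- ubar).
    by rewrite /nrmE !addr_ge0 // nrm_ge0.
  apply: (le_trans _ (mulr_ge0 (ltW eps0) N0)).
  have Dy := L2_sub mOm Ly Ley. have DJ := L2_sub mOm LJ LeJ.
  have Da := L2_sub mOm La Lea. have Db := L2_sub mOm Lb Leb.
  have Du := L2_sub mOm Lu Lub.
  have i1 := intR_prod mOm Lqy Dy. have i2 := intR_prod mOm LqJ DJ.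
  have i3 := intR_prod mOm Lqa Da. have i4 := intR_prod mOm Lqb Db.
  have i5 := intR_prod mOm Lqu Du.
  have i12 := intR_add mOm i1 i2. have i123 := intR_add mOm i12 i3.
  have i1234 := intR_add mOm i123 i4. have i12345 := intR_add mOm i1234 i5.
  rewrite /ipE /ip /=.
  rewrite -(RintegralD mOm i1 i2) -(RintegralD mOm i12 i3) -(RintegralD mOm i123 i4).
  rewrite -(RintegralD mOm i1234 i5).
  apply: (Rint_le0 mOm i12345).
  have big := andI _ _ Hq (andI _ _ Hu Hub).
  apply: filterS big => x [a1 [a2 a3]] Ox.
  have [[b1 b2 b3] [c1 c2 c3 c4]] := a1 Ox.
  have [u1 u2] := a2 Ox. have [v1 v2] := a3 Ox.
  rewrite /= b1 b2; rewrite /= in b3; rewrite b3.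
  simpl in *.
  have [Z1|Z1] := pselect (Om1 Om alpha ebar ubar x); have [Z3|Z3] := pselect (Om3 Om beta ebar ubar x).
  + have f1 := c1 Z1; have f3 := c3 Z3; case: Z1 => _ e1; case: Z3 => _ e3.
    have k1 : ea e x - ea ebar x - (u x - ubar x) <= 0 by lra.
    have k3 : 0 <= eb e x - eb ebar x - (u x - ubar x) by lra.
    nra.
  + have f1 := c1 Z1; have f3 := c4 Z3; case: Z1 => _ e1. rewrite f3.
    have k1 : ea e x - ea ebar x - (u x - ubar x) <= 0 by lra.
    nra.
  + have f1 := c2 Z1; have f3 := c3 Z3; case: Z3 => _ e3. rewrite f1.
    have k3 : 0 <= eb e x - eb ebar x - (u x - ubar x) by lra.
    nra.
  + have f1 := c2 Z1; have f3 := c4 Z3. rewrite f1 f3. nra.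
Qed.
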